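(* There is a sentence $\varphi$ of the first-order language with equality over a single binary relation symbol $R$, using only the three variables $x,y,z$, such that for every structure $(W,S)$ (with $S$ interpreting $R$): $(W,S)\models\varphi$ if and only if $(W,S)$ is isomorphic to a substructure of $(P,Z)$.
   Context: $(P,Z)$ is the ''pentagon'': $P=\{0,1,2,3,4\}$ and $Z=\{(i,j): i<5,\ j\equiv i+1 \pmod 5 \text{ or } j\equiv i-1 \pmod 5\}$. A substructure of $(P,Z)$ is $(A, Z\cap (A\times A))$ for a nonempty $A\subseteq P$. A formula ''uses only the variables $x,y,z$'' if every variable occurring in it, free or bound, is one of $x,y,z$ (variables may be requantified). *)

(* Defs.v *)
From mathcomp Require Import all_boot.
Set Implicit Arguments. Unset Strict Implicit. Unset Printing Implicit Defensive.

Inductive var3 : Type := vx | vy | vz.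

Definition var3_eqb (u v : var3) : bool :=
  match u, v with
  | vx, vx | vy, vy | vz, vz => true
  | _, _ => false
  end.

Inductive fo3 : Type :=
  | FEq  : var3 -> var3 -> fo3
  | FRel : var3 -> var3 -> fo3
  | FNeg : fo3 -> fo3
  | FAnd : fo3 -> fo3 -> fo3
  | FOr  : fo3 -> fo3 -> fo3
  | FImp : fo3 -> fo3 -> fo3
  | FEx  : var3 -> fo3 -> fo3
  | FAll : var3 -> fo3 -> fo3.

Fixpoint free_in (u : var3) (phi : fo3) : bool :=
  match phi with
  | FEq a b | FRel a b => var3_eqb u a || var3_eqb u b
  | FNeg p => free_in u p
  | FAnd p q | FOr p q | FImp p q => free_in u p || free_in u q
  | FEx v p | FAll v p => ~~ var3_eqb u v && free_in u p
  end.

Definition sentence (phi : fo3) : Prop :=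
  forall u, free_in u phi = false.

Definition upd (W : Type) (e : var3 -> W) (v : var3) (a : W) : var3 -> W :=
  fun u => if var3_eqb u v then a else e u.

Fixpoint sat (W : Type) (S : W -> W -> Prop) (e : var3 -> W) (phi : fo3) : Prop :=
  match phi with
  | FEq a b => e a = e b
  | FRel a b => S (e a) (e b)
  | FNeg p => ~ sat S e p
  | FAnd p q => sat S e p /\ sat S e q
  | FOr p q => sat S e p \/ sat S e q
  | FImp p q => sat S e p -> sat S e q
  | FEx v p => exists a : W, sat S (upd e v a) p
  | FAll v p => forall a : W, sat S (upd e v a) p
  end.

Definition models (W : Type) (S : W -> W -> Prop) (phi : fo3) : Prop :=
  forall e : var3 -> W, sat S e phi.

(* The pentagon (P, Z): P = {0,...,4}, Z = {(i,j) : j = i+1 or j = i-1 mod 5}. *)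
Definition pentZ (i j : 'I_5) : bool :=
  (j %% 5 == (i + 1) %% 5) || ((j + 1) %% 5 == i %% 5).

Definition iso_to_sub_pentagon (W : Type) (S : W -> W -> Prop) : Prop :=
  exists (A : {set 'I_5}) (f : W -> 'I_5) (g : 'I_5 -> W),
    A != set0 /\
    (forall w, f w \in A) /\
    (forall w, g (f w) = w) /\
    (forall a, a \in A -> f (g a) = a) /\
    (forall w1 w2, S w1 w2 <-> pentZ (f w1) (f w2)).

(* Main.v *)
From Stdlib Require Import Classical ClassicalEpsilon.
Require Import Defs.
From mathcomp Require Import all_boot.
Set Implicit Arguments. Unset Strict Implicit.

Definition phi_sym := FAll vx (FAll vy (FImp (FRel vx vy) (FRel vy vx))).
Definition phi_irr := FAll vx (FNeg (FRel vx vx)).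
Definition phi_tri := FAll vx (FAll vy (FAll vz (FNeg (FAnd (FRel vx vy) (FAnd (FRel vy vz) (FRel vz vx)))))).
Definition phi_ind := FAll vx (FAll vy (FAll vz (FImp (FNeg (FEq vx vy)) (FImp (FNeg (FEq vy vz)) (FImp (FNeg (FEq vx vz)) (FOr (FRel vx vy) (FOr (FRel vy vz) (FRel vx vz)))))))).
Definition phi_c4 := FNeg (FEx vx (FEx vy (FAnd (FNeg (FEq vx vy)) (FAnd (FNeg (FRel vx vy)) (FAnd (FAll vz (FImp (FRel vx vz) (FRel vy vz))) (FEx vz (FAnd (FRel vx vz) (FEx vy (FAnd (FRel vx vy) (FNeg (FEq vy vz))))))))))).
Definition phi_2k2 := FNeg (FEx vx (FEx vy (FAnd (FRel vx vy) (FAnd (FAll vz (FImp (FAnd (FNeg (FEq vz vx)) (FNeg (FRel vx vz))) (FAnd (FNeg (FEq vz vy)) (FNeg (FRel vy vz))))) (FEx vz (FAnd (FNeg (FEq vz vx)) (FAnd (FNeg (FRel vx vz)) (FEx vy (FAnd (FNeg (FEq vy vx)) (FAnd (FNeg (FRel vx vy)) (FNeg (FEq vy vz)))))))))))).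
Definition phi := FAnd phi_sym (FAnd phi_irr (FAnd phi_tri (FAnd phi_ind (FAnd phi_c4 phi_2k2)))).

Definition props (W : Type) (S : W -> W -> Prop) : Prop :=
  (forall a b, S a b -> S b a) /\
  (forall a, ~ S a a) /\
  (forall a b c, ~ (S a b /\ S b c /\ S c a)) /\
  (forall a b c, ~ a = b -> ~ b = c -> ~ a = c -> S a b \/ S b c \/ S a c) /\
  ~ (exists a, exists b, ~ a = b /\ ~ S a b /\ (forall z, S a z -> S b z) /\
        exists z, S a z /\ exists y, S a y /\ ~ y = z) /\
  ~ (exists a, exists b, S a b /\ (forall z, ~ z = a /\ ~ S a z -> ~ z = b /\ ~ S b z) /\
        exists z, ~ z = a /\ ~ S a z /\ exists y, ~ y = a /\ ~ S a y /\ ~ y = z).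

Lemma sat_phi (W : Type) (S : W -> W -> Prop) e : sat S e phi <-> props S.
Proof. split; exact id. Qed.

Lemma phi_sentence : sentence phi.
Proof. by case. Qed.

Ltac brute i := case: i => [[|[|[|[|[|?]]]]] ?] //.

Lemma L1 (i j : 'I_5) : pentZ i j -> pentZ j i.
Proof. brute i; brute j. Qed.
Lemma L2 (i : 'I_5) : ~~ pentZ i i.
Proof. brute i. Qed.
Lemma L3 (i j k : 'I_5) : pentZ i j -> pentZ j k -> pentZ k i -> False.
Proof. brute i; brute j; brute k. Qed.
Lemma L4 (i j k : 'I_5) : i != j -> j != k -> i != k -> [|| pentZ i j, pentZ j k | pentZ i k].
Proof. brute i; brute j; brute k. Qed.
Lemma L5 (i j k l : 'I_5) : i != j -> ~~ pentZ i j -> pentZ i k -> pentZ i l -> k != l -> pentZ j k -> pentZ j l -> False.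
Proof. brute i; brute j; brute k; brute l. Qed.
Lemma L6 (i j k l : 'I_5) : pentZ i j -> k != i -> ~~pentZ i k -> l != i -> ~~pentZ i l -> k != l -> k != j -> ~~pentZ j k -> l != j -> ~~pentZ j l -> False.
Proof. brute i; brute j; brute k; brute l. Qed.

Lemma backward (W : Type) (S : W -> W -> Prop) : iso_to_sub_pentagon S -> props S.
Proof.
move=> [A [f [g [_ [_ [gf [_ Hiff]]]]]]].
have inj : forall a b, f a = f b -> a = b.
  by move=> a b e; rewrite -(gf a) -(gf b) e.
have ne : forall a b, a <> b -> f a != f b.
  by move=> a b nab; apply/eqP => /inj.
have nS : forall a b, ~ S a b -> ~~ pentZ (f a) (f b).
  by move=> a b H; apply/negP => /Hiff.
split; [|split; [|split; [|split; [|split]]]].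
- by move=> a b /Hiff /L1 /Hiff.
- by move=> a /Hiff; apply/negP/L2.
- by move=> a b c [/Hiff h1 [/Hiff h2 /Hiff h3]]; exact: L3 h1 h2 h3.
- move=> a b c h1 h2 h3; have := L4 (ne _ _ h1) (ne _ _ h2) (ne _ _ h3).
  by case/or3P => /Hiff; tauto.
- move=> [a [b [h1 [h2 [h3 [z [h4 [y [h5 h6]]]]]]]]].
  apply: (L5 (ne _ _ h1) (nS _ _ h2) (proj1 (Hiff _ _) h5) (proj1 (Hiff _ _) h4) (ne _ _ h6)).
  + by apply/Hiff/h3.
  + by apply/Hiff/h3.
- move=> [a [b [h1 [h2 [z [h3 [h4 [y [h5 [h6 h7]]]]]]]]]].
  have [h8 h9] := h2 z (conj h3 h4).
  have [h10 h11] := h2 y (conj h5 h6).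
  exact: (L6 (proj1 (Hiff _ _) h1) (ne _ _ h3) (nS _ _ h4) (ne _ _ h5) (nS _ _ h6) (ne _ _ (fun e => h7 (esym e))) (ne _ _ h8) (nS _ _ h9) (ne _ _ h10) (nS _ _ h11)).
Qed.

Lemma build_iso (W : Type) (S : W -> W -> Prop) (x0 : W) (f : W -> 'I_5) :
  (forall a b, f a = f b -> a = b) ->
  (forall a b, S a b <-> pentZ (f a) (f b)) -> iso_to_sub_pentagon S.
Proof.
move=> inj Hiff.
pose P i := exists w, f w = i.
pose A := [set i : 'I_5 | if excluded_middle_informative (P i) then true else false].
pose g i := epsilon (inhabits x0) (fun w => f w = i).
have inA : forall w, f w \in A.
  move=> w; rewrite inE; case: excluded_middle_informative => // H; case: H; by exists w.
exists A, f, g; split; [|split; [|split; [|split]]] => //.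
- by apply/set0Pn; exists (f x0).
- move=> w; apply: inj; rewrite /g; exact: (epsilon_spec (inhabits x0) (fun w' => f w' = f w) (ex_intro _ w erefl)).
- move=> i; rewrite inE; case: excluded_middle_informative => // Hi _.
  exact: (epsilon_spec (inhabits x0) (fun w' => f w' = i) Hi).
Qed.

Definition p0 : 'I_5 := @Ordinal 5 0 isT.
Definition p1 : 'I_5 := @Ordinal 5 1 isT.
Definition p2 : 'I_5 := @Ordinal 5 2 isT.
Definition p3 : 'I_5 := @Ordinal 5 3 isT.
Definition p4 : 'I_5 := @Ordinal 5 4 isT.

Definition mkf (W : Type) (S : W -> W -> Prop) (x0 a c : W) (q2 q3 : 'I_5) (w : W) : 'I_5 :=
  if excluded_middle_informative (w = x0) then p0 else
  if excluded_middle_informative (S x0 w) then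
    (if excluded_middle_informative (w = a) then p1 else p4)
  else (if excluded_middle_informative (w = c) then q2 else q3).

Lemma mkf_cat (W : Type) (S : W -> W -> Prop) (x0 a c : W) q2 q3 w :
  let f := mkf S x0 a c q2 q3 in
  (w = x0 /\ f w = p0) \/
  (w = a /\ a <> x0 /\ S x0 a /\ f w = p1) \/
  ((w <> x0 /\ S x0 w /\ w <> a) /\ f w = p4) \/
  (w = c /\ c <> x0 /\ ~ S x0 c /\ f w = q2) \/
  ((w <> x0 /\ ~ S x0 w /\ w <> c) /\ f w = q3).
Proof.
rewrite /mkf /=.
case: (excluded_middle_informative (w = x0)) => h1 /=; first by left.
case: (excluded_middle_informative (S x0 w)) => h2 /=.
  case: (excluded_middle_informative (w = a)) => h3 /=.
    by right; left; subst w; do 3 (split => //).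
  by right; right; left.
case: (excluded_middle_informative (w = c)) => h3 /=.
  by do 3 right; left; subst w; do 3 (split => //).
by do 4 right.
Qed.

Ltac neqI := let e := fresh in move=> e; move: (congr1 (@nat_of_ord 5) e) => //=.
Ltac pz := match goal with |- context [pentZ ?i ?j] => let b := eval vm_compute in (pentZ i j) in change (pentZ i j) with b end.
Ltac fin hs := pz; match goal with
  | |- _ <-> is_true true => split => // _; solve [eauto | exfalso; eauto]
  | |- _ <-> is_true false => let H := fresh "H" in split => //; intro H; exfalso; solve [eauto | apply hs in H; eauto]
  end.

Lemma forward (W : Type) (S : W -> W -> Prop) (x0 : W) : props S ->
  exists f : W -> 'I_5, (forall a b, f a = f b -> a = b) /\
     (forall a b, S a b <-> pentZ (f a) (f b)).
Proof.
move=> [Hsym [Hirr [Htri [Hind [Hc4 H2k2]]]]].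
have tri : forall a b c, S a b -> S b c -> S c a -> False.
  by move=> a b c h1 h2 h3; apply: (Htri a b c).
have Nind : forall u v, S x0 u -> S x0 v -> ~ S u v.
  by move=> u v h1 h2 h3; apply: (tri x0 u v) => //; apply: Hsym.
have Mcl : forall u v, u <> x0 -> ~ S x0 u -> v <> x0 -> ~ S x0 v -> u <> v -> S u v.
  move=> u v h1 h2 h3 h4 h5.
  have := Hind x0 u v (fun e => h1 (esym e)) h5 (fun e => h3 (esym e)); tauto.
have N2 : forall a b b', S x0 a -> S x0 b -> S x0 b' -> b <> a -> b' <> a -> b = b'.
  move=> a b b' h1 h2 h3 h4 h5; apply: NNPP => h6.
  have := Hind a b b' (fun e => h4 (esym e)) h6 (fun e => h5 (esym e)).
  case=> [|[]]; [exact: Nind|exact: Nind|exact: Nind].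
have M2 : forall c d d', c <> x0 -> ~ S x0 c -> d <> x0 -> ~ S x0 d -> d' <> x0 -> ~ S x0 d' ->
    d <> c -> d' <> c -> d = d'.
  move=> c d d' h1 h2 h3 h4 h5 h6 h7 h8; apply: NNPP => h9.
  apply: (tri c d d'); apply: Mcl => //; exact: nesym.
have c4 : forall x y z1 z2, x <> y -> ~ S x y -> (forall z, S x z -> S y z) ->
    S x z1 -> S x z2 -> z1 <> z2 -> False.
  move=> x y z1 z2 h1 h2 h3 h4 h5 h6; apply: Hc4.
  exists x, y; do 3 (split => //); exists z1; split => //; exists z2; split => //.
  exact: nesym.
have k2 : forall x y z1 z2, S x y -> (forall z, z <> x -> ~ S x z -> z <> y /\ ~ S y z) ->
    z1 <> x -> ~ S x z1 -> z2 <> x -> ~ S x z2 -> z2 <> z1 -> False.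
  move=> x y z1 z2 h1 h2 h3 h4 h5 h6 h7; apply: H2k2.
  exists x, y; split => //; split; first by move=> z [? ?]; apply: h2.
  by exists z1; do 2 (split => //); exists z2.
case: (classic (exists a c, S x0 a /\ (c <> x0 /\ ~ S x0 c) /\ S a c)).
- move=> [a [c [Na [[cx nNc] Sac]]]].
  have cat w := mkf_cat S x0 a c p2 p3 w; simpl in cat.
  have fad : forall d, d <> x0 -> ~ S x0 d -> d <> c -> S a d -> False.
    move=> d h1 h2 h3 h4; apply: (tri a c d) => //.
      by apply: Mcl => //; exact: nesym.
    exact: Hsym.
  have fbc : forall b, S x0 b -> b <> a -> S b c -> False.
    move=> b h1 h2 h3; apply: (c4 x0 c a b) => //.
    - by move=> e; apply: cx; rewrite e.
    - move=> z hz; case: (classic (z = a)) => [->|za]; first exact: Hsym.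
      case: (classic (z = b)) => [->|zb]; first exact: Hsym.
      by case: zb; apply: (N2 a).
    - exact: nesym.
  have fbd : forall b d, S x0 b -> b <> a -> d <> x0 -> ~ S x0 d -> d <> c -> S b d.
    move=> b d h1 h2 h3 h4 h5.
    have : a <> d by move=> e; apply: h4; rewrite -e.
    have : b <> d by move=> e; apply: h4; rewrite -e.
    move=> bd ad; have := Hind a b d (nesym h2) bd ad.
    case=> [|[]] // H; [case: (Nind a b) | case: (fad d)] => //.
  have fcd : forall d, d <> x0 -> ~ S x0 d -> d <> c -> S c d.
    by move=> d h1 h2 h3; apply: Mcl => //; exact: nesym.
  have fdd : forall d d', d <> x0 -> ~ S x0 d -> d <> c -> d' <> x0 -> ~ S x0 d' -> d' <> c -> S d d' -> False.
    move=> d d' h1 h2 h3 h4 h5 h6; rewrite (M2 c d d') //; exact: Hirr.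
  exists (mkf S x0 a c p2 p3); split.
  + move=> w1 w2.
    case: (cat w1) => [[-> e1]|[[-> [? [? e1]]]|[[[b1x [b1N b1a]] e1]|[[-> [? [? e1]]]|[[d1x [d1N d1c]] e1]]]]];
    case: (cat w2) => [[-> e2]|[[-> [? [? e2]]]|[[[b2x [b2N b2a]] e2]|[[-> [? [? e2]]]|[[d2x [d2N d2c]] e2]]]]];
    rewrite ?e1 ?e2; first [ done | by neqI | move=> _ ].
    * exact: (N2 a).
    * exact: (M2 c).
  + have Irr' : forall u, S u u -> False by exact: Hirr.
    have Nind' : forall u v, S x0 u -> S x0 v -> S u v -> False by exact: Nind.
    clear Hind Hc4 H2k2 c4 k2 Mcl N2 M2 tri Htri Hirr Nind.
    move=> w1 w2.
    case: (cat w1) => [[-> e1]|[[-> [? [? e1]]]|[[[b1x [b1N b1a]] e1]|[[-> [? [? e1]]]|[[d1x [d1N d1c]] e1]]]]];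
    case: (cat w2) => [[-> e2]|[[-> [? [? e2]]]|[[[b2x [b2N b2a]] e2]|[[-> [? [? e2]]]|[[d2x [d2N d2c]] e2]]]]];
    rewrite ?e1 ?e2; fin Hsym.
- move=> nE.
  have nE' : forall u v, S x0 u -> v <> x0 -> ~ S x0 v -> S u v -> False.
    by move=> u v h1 h2 h3 h4; apply: nE; exists u, v.
  have [a Ha] : exists a, (exists b, S x0 b) -> S x0 a.
    case: (classic (exists b, S x0 b)) => [[b hb]|hn]; first by exists b.
    by exists x0.
  have [c Hc] : exists c, (exists d, d <> x0 /\ ~ S x0 d) -> c <> x0 /\ ~ S x0 c.
    case: (classic (exists d, d <> x0 /\ ~ S x0 d)) => [[d hd]|hn]; first by exists d.
    by exists x0.
  have cat w := mkf_cat S x0 a c p3 p2 w; simpl in cat.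
  have fad : forall d, S x0 a -> d <> x0 -> ~ S x0 d -> d <> c -> False.
    move=> d h1 h2 h3 h4.
    have [cx nc] : c <> x0 /\ ~ S x0 c by apply: Hc; exists d.
    apply: (k2 x0 a c d h1) => //.
    move=> z hz nz; split; last by move=> ?; apply: (nE' a z).
    by move=> e; apply: nz; rewrite e.
  have fbc : forall b, S x0 b -> b <> a -> c <> x0 -> ~ S x0 c -> False.
    move=> b h1 h2 h3 h4.
    have Na : S x0 a by apply: Ha; exists b.
    have bc : b <> c by move=> e; apply: h4; rewrite -e.
    have ac : a <> c by move=> e; apply: h4; rewrite -e.
    have := Hind a b c (nesym h2) bc ac.
    case=> [|[]] H; [exact: (Nind a b) | exact: (nE' b c) | exact: (nE' a c)].
  have fcd : forall d, c <> x0 -> ~ S x0 c -> d <> x0 -> ~ S x0 d -> d <> c -> S c d.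
    by move=> d h1 h2 h3 h4 h5; apply: Mcl => //; exact: nesym.
  have fdd : forall d d', d <> x0 -> ~ S x0 d -> d <> c -> d' <> x0 -> ~ S x0 d' -> d' <> c -> S d d' -> False.
    move=> d d' h1 h2 h3 h4 h5 h6.
    have [cx nc] : c <> x0 /\ ~ S x0 c by apply: Hc; exists d.
    rewrite (M2 c d d') //; exact: Hirr.
  exists (mkf S x0 a c p3 p2); split.
  + move=> w1 w2.
    case: (cat w1) => [[-> e1]|[[-> [? [? e1]]]|[[[b1x [b1N b1a]] e1]|[[-> [? [? e1]]]|[[d1x [d1N d1c]] e1]]]]];
    case: (cat w2) => [[-> e2]|[[-> [? [? e2]]]|[[[b2x [b2N b2a]] e2]|[[-> [? [? e2]]]|[[d2x [d2N d2c]] e2]]]]];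
    rewrite ?e1 ?e2; first [ done | by neqI | move=> _ ].
    * by apply: (N2 a) => //; apply: Ha; exists w1.
    * have [? ?] : c <> x0 /\ ~ S x0 c by apply: Hc; exists w1.
      exact: (M2 c).
  + have Irr' : forall u, S u u -> False by exact: Hirr.
    have Nind' : forall u v, S x0 u -> S x0 v -> S u v -> False by exact: Nind.
    clear Hind Hc4 H2k2 c4 k2 Mcl N2 M2 tri Htri Hirr Nind nE.
    move=> w1 w2.
    case: (cat w1) => [[-> e1]|[[-> [? [? e1]]]|[[[b1x [b1N b1a]] e1]|[[-> [? [? e1]]]|[[d1x [d1N d1c]] e1]]]]];
    case: (cat w2) => [[-> e2]|[[-> [? [? e2]]]|[[[b2x [b2N b2a]] e2]|[[-> [? [? e2]]]|[[d2x [d2N d2c]] e2]]]]];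
    rewrite ?e1 ?e2; fin Hsym.
Qed.

Theorem lemma1 :
  exists phi : fo3, sentence phi /\
    forall (W : Type) (S : W -> W -> Prop), inhabited W ->
      (models S phi <-> iso_to_sub_pentagon S).
Proof.
exists phi; split; first exact: phi_sentence.
move=> W S [x0]; split.
- move=> H; have /sat_phi P := H (fun _ => x0).
  have [f [inj Hiff]] := forward x0 P.
  exact: (@build_iso W S x0 f inj Hiff).
- move=> I e; apply/sat_phi; exact: backward.
Qed.
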